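(* Let $n\ge2$, $Q>0$ real, and let $P\in\mathrm{Mat}(n^2,\mathbb{C})$ be a solution of rank $r$ to $$P^*=P,\quad P^2=P,\quad Q^2(P_1P_2P_1-P_2P_1P_2)=P_1-P_2,$$ where $P_1=P\otimes I_n$, $P_2=I_n\otimes P$. Let $k=\tfrac12\operatorname{rank}(P_1-P_2)$. Then $$rn-k+Q^{-1}k\le r^2 .$$
   Context: $I_n$ is the $n\times n$ identity matrix and $\otimes$ is the Kronecker product. *)

(* Defs.v *)
From HB Require Import structures.
From mathcomp Require Import all_boot all_order all_algebra.
From mathcomp Require Import complex mxtens.
From mathcomp Require Import reals.
Set Implicit Arguments. Unset Strict Implicit. Unset Printing Implicit Defensive.
Import Order.TTheory GRing.Theory Num.Theory.
Local Open Scope ring_scope.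

Definition adjmx (R : realType) (m n : nat) (A : 'M[R[i]]_(m, n)) : 'M[R[i]]_(n, m) :=
  (map_mx Num.conj A)^T.

(* P1 = P (x) I_n and P2 = I_n (x) P, with the standard Kronecker product
   (tensmx, index (i,j) |-> i*n + j). *)
Definition P1 (R : realType) (n : nat) (P : 'M[R[i]]_(n * n)) : 'M[R[i]]_(n * n * n) :=
  tensmx P (1%:M : 'M[R[i]]_n).
Definition P2 (R : realType) (n : nat) (P : 'M[R[i]]_(n * n)) : 'M[R[i]]_(n * n * n) :=
  castmx (mulnA n n n, mulnA n n n) (tensmx (1%:M : 'M[R[i]]_n) P).

(* Main.v *)
Require Import Defs.
From HB Require Import structures.
From mathcomp Require Import all_boot all_order all_algebra.
From mathcomp Require Import complex mxtens.
From mathcomp Require Import reals.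
From mathcomp Require Import zify ring lra.
Import Order.TTheory GRing.Theory Num.Theory.
Local Open Scope ring_scope.
Local Open Scope complex_scope.

Section Adj.
Variable R : realType.
Local Notation C := (R[i]).

Lemma adjmxE m n (A : 'M[C]_(m, n)) i j : adjmx A i j = Num.conj (A j i).
Proof. by rewrite /adjmx !mxE. Qed.

Lemma adjmxK m n (A : 'M[C]_(m, n)) : adjmx (adjmx A) = A.
Proof. by apply/matrixP=> i j; rewrite !adjmxE conjCK. Qed.

Lemma adjmxM m n p (A : 'M[C]_(m, n)) (B : 'M[C]_(n, p)) :
  adjmx (A *m B) = adjmx B *m adjmx A.
Proof. by rewrite /adjmx map_mxM trmx_mul. Qed.

Lemma adjmxD m n (A B : 'M[C]_(m, n)) : adjmx (A + B) = adjmx A + adjmx B.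
Proof. by rewrite /adjmx map_mxD linearD. Qed.

Lemma adjmxN m n (A : 'M[C]_(m, n)) : adjmx (- A) = - adjmx A.
Proof. by rewrite /adjmx map_mxN linearN. Qed.

Lemma adjmxB m n (A B : 'M[C]_(m, n)) : adjmx (A - B) = adjmx A - adjmx B.
Proof. by rewrite adjmxD adjmxN. Qed.

Lemma adjmxZ m n c (A : 'M[C]_(m, n)) : adjmx (c *: A) = Num.conj c *: adjmx A.
Proof. by apply/matrixP=> i j; rewrite !mxE /= rmorphM. Qed.

Lemma adjmxR m n (c : R) (A : 'M[C]_(m, n)) : adjmx (c%:C *: A) = c%:C *: adjmx A.
Proof. by rewrite adjmxZ; congr (_ *: _); exact: conjc_real. Qed.

Lemma tr_adjmx n (A : 'M[C]_n) : \tr (adjmx A) = Num.conj (\tr A).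
Proof. rewrite /mxtrace rmorph_sum; apply: eq_bigr => i _; by rewrite adjmxE. Qed.

Lemma adjmx1 n : adjmx (1%:M : 'M[C]_n) = 1%:M.
Proof. by apply/matrixP=> i j; rewrite adjmxE !mxE eq_sym rmorph_nat. Qed.

Lemma herm_sq0 n (A : 'M[C]_n) : adjmx A = A -> A *m A = 0 -> A = 0.
Proof.
move=> hA h0.
have : \tr (A *m A) = 0 by rewrite h0 mxtrace0.
rewrite /mxtrace.
have -> : \sum_i (A *m A) i i = \sum_i \sum_j (A i j * Num.conj (A i j)).
  apply: eq_bigr => i _; rewrite mxE; apply: eq_bigr => j _.
  by rewrite -{2}hA adjmxE.
move/eqP; rewrite psumr_eq0; last by move=> i _; apply: sumr_ge0 => j _; exact: mul_conjC_ge0.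
move/allP => H; apply/matrixP => i j; rewrite mxE.
have := H i (mem_index_enum i); rewrite psumr_eq0; last by move=> k _; exact: mul_conjC_ge0.
by move/allP/(_ j (mem_index_enum j)); rewrite mul_conjC_eq0 => /eqP.
Qed.

End Adj.
Lemma sum_lt_min (F : pzRingType) n r : \sum_(i < n) ((i < r)%N%:R : F) = (minn n r)%:R.
Proof.
elim: n => [|n IH]; first by rewrite big_ord0 min0n.
rewrite big_ord_recr /= IH -natrD; congr (_%:R).
case: (ltnP n r) => h.
  by rewrite addn1; lia.
by rewrite addn0; lia.
Qed.

Lemma tr_idem (F : fieldType) n (A : 'M[F]_n) : A *m A = A -> \tr A = (\rank A)%:R.
Proof.
move=> hA.
set L := col_ebase A; set U := row_ebase A; set p := (pid_mx (\rank A) : 'M[F]_n).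
have eA : A = L *m p *m U by rewrite mulmx_ebase.
have uL : L \in unitmx := col_ebase_unit A.
have uU : U \in unitmx := row_ebase_unit A.
have hp : p *m (U *m L) *m p = p.
  have : L *m (p *m (U *m L) *m p) *m U = L *m p *m U.
    have := hA; rewrite eA !mulmxA => ->; done.
  move=> h.
  have := congr1 (fun M => invmx L *m (M *m invmx U)) h.
  by rewrite /= !mulmxK // !mulKmx //.
have pp : p *m p = p by rewrite /p pid_mx_id // rank_leq_row.
have -> : \tr A = \tr p.
  rewrite {1}eA -mulmxA mxtrace_mulC -{1}pp -!mulmxA mxtrace_mulC !mulmxA.
  by rewrite -(mulmxA p U L) hp.
rewrite /mxtrace.
under eq_bigr => i _ do rewrite mxE eqxx /=.
rewrite sum_lt_min; congr (_%:R).
by apply/minn_idPr; exact: rank_leq_row.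
Qed.
Lemma sum_tens (V : nmodType) m n (F : 'I_(m * n) -> V) :
  \sum_a F a = \sum_(i < m) \sum_(j < n) F (@mxtens_index m n (i, j)).
Proof.
rewrite pair_big /=.
rewrite (reindex (@mxtens_unindex m n)) /=; last first.
  by exists (@mxtens_index m n) => x _; rewrite (mxtens_indexK, mxtens_unindexK).
by apply: eq_bigr => a _; rewrite mxtens_unindexK.
Qed.

Section Idx.
Variable n : nat.
Definition ix (i j : 'I_n) : 'I_(n * n) := @mxtens_index n n (i, j).
Definition t3 (i j k : 'I_n) : 'I_(n * n * n) := @mxtens_index (n * n) n (ix i j, k).

Lemma sum2 (V : nmodType) (F : 'I_(n * n) -> V) :
  \sum_a F a = \sum_i \sum_j F (ix i j).
Proof. exact: sum_tens. Qed.

Lemma sum3 (V : nmodType) (F : 'I_(n * n * n) -> V) :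
  \sum_u F u = \sum_i \sum_j \sum_k F (t3 i j k).
Proof.
rewrite sum_tens sum2; apply: eq_bigr => i _; apply: eq_bigr => j _; done.
Qed.

Lemma t3P (u : 'I_(n * n * n)) : exists i j k, u = t3 i j k.
Proof.
case: (mxtens_indexP u) => a k; case: (mxtens_indexP a) => i j.
by exists i, j, k.
Qed.

Lemma mx3P (T : Type) (A B : 'M[T]_(n * n * n)) :
  (forall i j k i' j' k', A (t3 i j k) (t3 i' j' k') = B (t3 i j k) (t3 i' j' k')) -> A = B.
Proof.
move=> H; apply/matrixP => u v.
have [i [j [k ->]]] := t3P u; have [i' [j' [k' ->]]] := t3P v; exact: H.
Qed.

Lemma cv3P (T : Type) (A B : 'cV[T]_(n * n * n)) :
  (forall i j k, A (t3 i j k) 0 = B (t3 i j k) 0) -> A = B.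
Proof.
move=> H; apply/matrixP => u z; rewrite [z]ord1.
have [i [j [k ->]]] := t3P u; exact: H.
Qed.

Lemma cast_t3 i j k :
  cast_ord (esym (mulnA n n n)) (t3 i j k) = @mxtens_index n (n * n) (i, ix j k).
Proof. apply: val_inj => /=. lia. Qed.

Variable R : realType.
Local Notation C := (R[i]).
Variable P : 'M[C]_(n * n).

Lemma P1E i j k i' j' k' :
  P1 P (t3 i j k) (t3 i' j' k') = P (ix i j) (ix i' j') * (k == k')%:R.
Proof. by rewrite /P1 tensmxE mxE. Qed.

Lemma P2E i j k i' j' k' :
  P2 P (t3 i j k) (t3 i' j' k') = (i == i')%:R * P (ix j k) (ix j' k').
Proof. by rewrite /P2 castmxE !cast_t3 tensmxE mxE. Qed.

End Idx.

Lemma sum_pick (V : nmodType) m (F : 'I_m -> V) i :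
  (forall a, a != i -> F a = 0) -> \sum_a F a = F i.
Proof. by move=> H; rewrite (bigD1 i) //= big1 ?addr0 // => a /H. Qed.

Lemma sum_delta (K : pzRingType) m (a b : 'I_m -> K) k :
  \sum_e (a e * (k == e)%:R * b e) = a k * b k.
Proof.
rewrite (@sum_pick _ _ _ k) ?eqxx ?mulr1 // => e /negbTE.
by rewrite eq_sym => ->; rewrite mulr0 mul0r.
Qed.

Lemma sum_delta' (K : pzRingType) m (a b : 'I_m -> K) k :
  \sum_e ((e == k)%:R * a e * b e) = a k * b k.
Proof.
rewrite (@sum_pick _ _ _ k) ?eqxx ?mul1r // => e /negbTE.
by move=> ->; rewrite !mul0r.
Qed.

Lemma sum_deltaF (K : pzRingType) m (F : 'I_m -> K) k :
  \sum_e ((e == k)%:R * F e) = F k.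
Proof.
rewrite (@sum_pick _ _ _ k) ?eqxx ?mul1r // => e /negbTE.
by move=> ->; rewrite !mul0r.
Qed.

Section Vec.
Variable R : realType.
Local Notation C := (R[i]).
Variable n : nat.
Variable P : 'M[C]_(n * n).
Hypothesis hH : adjmx P = P.
Hypothesis hI : P *m P = P.
Local Notation ix := (@ix n).
Local Notation t3 := (@t3 n).
Local Notation unx := (@mxtens_unindex (n * n) n).
Local Notation un2 := (@mxtens_unindex n n).

Lemma PPs x y : \sum_c P x c * Num.conj (P y c) = P x y.
Proof.
transitivity ((P *m adjmx P) x y); first by rewrite mxE; apply: eq_bigr => c _; rewrite adjmxE.
by rewrite hH hI.
Qed.

Lemma PPE x y : \sum_a P x a * P a y = P x y.
Proof. by transitivity ((P *m P) x y); [rewrite mxE | rewrite hI]. Qed.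

Definition Tix := ('I_n * 'I_(n * n) * 'I_(n * n))%type.

Definition xv (t : Tix) : 'cV[C]_(n * n * n) :=
  \col_u (P (unx u).1 t.1.2 * P (ix t.1.1 (unx u).2) t.2).
Definition yv (t : Tix) : 'cV[C]_(n * n * n) :=
  \col_u (P (ix (un2 (unx u).1).1 t.1.1) t.1.2 *
          P (ix (un2 (unx u).1).2 (unx u).2) t.2).

Lemma xvE t i j k : xv t (t3 i j k) 0 = P (ix i j) t.1.2 * P (ix t.1.1 k) t.2.
Proof. by rewrite /xv mxE /t3 mxtens_indexK. Qed.
Lemma yvE t i j k : yv t (t3 i j k) 0 = P (ix i t.1.1) t.1.2 * P (ix j k) t.2.
Proof. by rewrite /yv mxE /t3 !mxtens_indexK. Qed.

Lemma sumT (V : nmodType) (F : Tix -> V) :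
  \sum_t F t = \sum_j0 \sum_c \sum_d F (j0, c, d).
Proof.
symmetry; rewrite (pair_bigA _ (fun j0 c => \sum_d F (j0, c, d))) /=.
rewrite (pair_bigA _ (fun p d => F (p.1, p.2, d))) /=.
by apply: eq_bigr => [[[a b] c]] _.
Qed.

Lemma P1x t : P1 P *m xv t = xv t.
Proof.
apply: cv3P => i j k; rewrite mxE sum3 xvE.
under eq_bigr => ? _ do under eq_bigr => ? _ do under eq_bigr => ? _ do rewrite P1E xvE.
under eq_bigr => i' _ do under eq_bigr => j' _ do rewrite sum_delta.
rewrite -(@sum2 _ _ (fun a => P (ix i j) a * (P a t.1.2 * P (ix t.1.1 k) t.2))).
under eq_bigr => ? _ do rewrite mulrA.
by rewrite -mulr_suml PPE.
Qed.

Lemma P12E : P1 P *m P2 P = \sum_t xv t *m adjmx (yv t).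
Proof.
apply: mx3P => i j k i' j' k'.
rewrite mxE sum3.
under eq_bigr => ? _ do under eq_bigr => ? _ do under eq_bigr => ? _ do rewrite P1E P2E.
under eq_bigr => ? _ do under eq_bigr => ? _ do rewrite sum_delta.
rewrite exchange_big /=.
under eq_bigr => ? _ do under eq_bigr => ? _ do rewrite mulrCA.
under eq_bigr => ? _ do rewrite sum_deltaF.
rewrite summxE sumT; apply: eq_bigr => j0 _.
under eq_bigr => ? _ do under eq_bigr => ? _ do rewrite mxE big_ord1 adjmxE xvE yvE /=.
rewrite -PPs -PPs mulr_suml; apply: eq_bigr => c _.
rewrite mulr_sumr; apply: eq_bigr => d _.
by rewrite !rmorphM /= mulrACA.
Qed.

Lemma trnorm (v : 'cV[C]_(n * n * n)) :
  \tr (adjmx v *m v) = \sum_i \sum_j \sum_k Num.conj (v (t3 i j k) 0) * v (t3 i j k) 0.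
Proof.
rewrite /mxtrace big_ord1 mxE sum3; do 3! (apply: eq_bigr => ? _).
by rewrite adjmxE.
Qed.

Definition g a c := P a c * Num.conj (P a c).

Lemma trP_sq : (\tr P) ^+ 2 = \sum_c \sum_d \sum_i \sum_j \sum_j0 \sum_k
   g (ix i j) c * g (ix j0 k) d.
Proof.
have -> : \tr P = \sum_c \sum_i \sum_j g (ix i j) c.
  rewrite /mxtrace; under eq_bigr => a _ do rewrite -PPs.
  by rewrite exchange_big /=; apply: eq_bigr => c _; rewrite sum2.
rewrite expr2 mulr_suml; apply: eq_bigr => c _.
rewrite mulr_sumr; apply: eq_bigr => d _.
rewrite mulr_suml; apply: eq_bigr => i _.
rewrite mulr_suml; apply: eq_bigr => j _.
rewrite mulr_sumr; apply: eq_bigr => j0 _.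
by rewrite mulr_sumr.
Qed.

Lemma normx : \sum_t \tr (adjmx (xv t) *m xv t) = (\tr P) ^+ 2.
Proof.
rewrite trP_sq sumT.
under eq_bigr => ? _ do under eq_bigr => ? _ do under eq_bigr => ? _ do rewrite trnorm.
under eq_bigr => ? _ do under eq_bigr => ? _ do under eq_bigr => ? _ do
  under eq_bigr => ? _ do under eq_bigr => ? _ do under eq_bigr => ? _ do
  rewrite xvE /= rmorphM mulrACA.
rewrite exchange_big /=; apply: eq_bigr => c _.
rewrite exchange_big /=; apply: eq_bigr => d _.
rewrite exchange_big /=; apply: eq_bigr => i _.
rewrite exchange_big /=; apply: eq_bigr => j _.
apply: eq_bigr => j0 _; apply: eq_bigr => k _.
by rewrite /g [_^* * P (ix i j) c]mulrC [_^* * P (ix j0 k) d]mulrC.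
Qed.

Lemma normy : \sum_t \tr (adjmx (yv t) *m yv t) = (\tr P) ^+ 2.
Proof.
rewrite trP_sq sumT.
under eq_bigr => ? _ do under eq_bigr => ? _ do under eq_bigr => ? _ do rewrite trnorm.
under eq_bigr => ? _ do under eq_bigr => ? _ do under eq_bigr => ? _ do
  under eq_bigr => ? _ do under eq_bigr => ? _ do under eq_bigr => ? _ do
  rewrite yvE /= rmorphM mulrACA.
rewrite exchange_big /=; apply: eq_bigr => c _.
rewrite exchange_big /=; apply: eq_bigr => d _.
rewrite exchange_big /=; apply: eq_bigr => i _.
apply: eq_bigr => j0 _; apply: eq_bigr => j _; apply: eq_bigr => k _.
by rewrite /g [_^* * P (ix i j0) c]mulrC [_^* * P (ix j k) d]mulrC.
Qed.

Lemma trnorm_ge0 (v : 'cV[C]_(n * n * n)) : 0 <= \tr (adjmx v *m v).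
Proof.
rewrite trnorm; do 3! (apply: sumr_ge0 => ? _).
by rewrite mulrC mul_conjC_ge0.
Qed.

Lemma key (W : 'M[C]_(n * n * n)) : adjmx W *m W = P1 P ->
  0 <= (\tr P) ^+ 2 *+ 2 - \tr (W *m (P1 P *m P2 P))
        - Num.conj (\tr (W *m (P1 P *m P2 P))).
Proof.
move=> hW.
set st := fun t => \tr (W *m (xv t *m adjmx (yv t))).
have e t : \tr (adjmx (W *m xv t - yv t) *m (W *m xv t - yv t)) =
   \tr (adjmx (xv t) *m xv t) - Num.conj (st t) - st t + \tr (adjmx (yv t) *m yv t).
  rewrite adjmxB adjmxM mulmxBl !mulmxBr !raddfB /=.
  have -> : adjmx (xv t) *m adjmx W *m (W *m xv t) = adjmx (xv t) *m xv t.
    by rewrite -mulmxA (mulmxA (adjmx W)) hW P1x.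
  have -> : \tr (adjmx (xv t) *m adjmx W *m yv t) = Num.conj (st t).
    rewrite /st mxtrace_mulC -tr_adjmx !adjmxM adjmxK.
    by rewrite mulmxA.
  have -> : \tr (adjmx (yv t) *m (W *m xv t)) = st t.
    by rewrite /st mxtrace_mulC -mulmxA.
  by rewrite opprK addrA.
have h0 : 0 <= \sum_(t : Tix) \tr (adjmx (W *m xv t - yv t) *m (W *m xv t - yv t)).
  by apply: sumr_ge0 => t _; exact: trnorm_ge0.
move: h0; under eq_bigr => t _ do rewrite e.
rewrite !big_split /= !sumrN normx normy -rmorph_sum.
have -> : \sum_t st t = \tr (W *m (P1 P *m P2 P)).
  by rewrite P12E mulmx_sumr raddf_sum.
set T := \tr _; set r2 := _ ^+ 2.
move=> h; apply: (le_trans h); rewrite le_eqVlt; apply/orP; left; apply/eqP.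
rewrite mulr2n; ring.
Qed.

End Vec.

Section GenRing.
Variable K : pzRingType.
Variables A B : K.
Hypothesis hA : A * A = A.
Hypothesis hB : B * B = B.

Lemma XAA X : X * A * A = X * A. Proof. by rewrite -mulrA hA. Qed.
Lemma XBB X : X * B * B = X * B. Proof. by rewrite -mulrA hB. Qed.

Lemma sq_id : (A - B) * (A - B) = A + B - A * B - B * A.
Proof.
rewrite mulrBl !mulrBr hA hB opprB.
by rewrite addrA (addrAC A).
Qed.

Lemma cube_id : (A - B) * (A - B) * (A - B) = (A - B) - (A * B * A - B * A * B).
Proof.
rewrite sq_id mulrBr !mulrBl !mulrDl ?mulrA hA hB ?XAA ?XBB.
rewrite (addrAC (A + B * A)) addrK [A * B + B]addrC addrK.
by rewrite !opprB addrACA [in RHS]addrACA [- B + _]addrC.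
Qed.
Variable c : K.
Hypothesis hcA : c * A = A * c.
Hypothesis hrel : A * B * A - B * A * B = c * (A - B).

Lemma SS_id : (A * B * A) * (A * B * A) = A * B * A + c * (A * B * A - A).
Proof.
have e : B * A * B = A * B * A - c * (A - B) by rewrite -hrel opprB addrC subrK.
have -> : A * B * A * (A * B * A) = A * (B * A * B) * A.
  by rewrite !mulrA XAA.
rewrite e [A * (_ - _)]mulrBr mulrBl !mulrA hA XAA -hcA.
have h2 : A * (A - B) * A = A - A * B * A by rewrite mulrBr mulrBl !hA ?XAA.
have -> : c * A * (A - B) * A = c * (A * (A - B) * A) by rewrite !mulrA.
by rewrite h2 -mulrN opprB.
Qed.

Lemma SA_id : A * B * A * A = A * B * A. Proof. exact: XAA. Qed.
Lemma AS_id : A * (A * B * A) = A * B * A. Proof. by rewrite !mulrA hA. Qed.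
End GenRing.

Section Tens.
Variable R : realType.
Local Notation C := (R[i]).

Lemma castmx_mulmx m m' (e : m = m') (M N : 'M[C]_m) :
  castmx (e, e) M *m castmx (e, e) N = castmx (e, e) (M *m N).
Proof. by case: m' / e. Qed.
Lemma adjmx_cast m m' (e : m = m') (M : 'M[C]_m) :
  adjmx (castmx (e, e) M) = castmx (e, e) (adjmx M).
Proof. by case: m' / e. Qed.
Lemma tr_cast m m' (e : m = m') (M : 'M[C]_m) : \tr (castmx (e, e) M) = \tr M.
Proof. by case: m' / e. Qed.
Lemma adjmx_tens m n p q (M : 'M[C]_(m, n)) (N : 'M[C]_(p, q)) :
  adjmx (M *t N) = adjmx M *t adjmx N.
Proof. by rewrite /adjmx map_mxT trmx_tens. Qed.
Lemma tr_tens m p (M : 'M[C]_m) (N : 'M[C]_p) : \tr (M *t N) = \tr M * \tr N.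
Proof.
rewrite /mxtrace sum_tens mulr_suml; apply: eq_bigr => i _.
rewrite mulr_sumr; apply: eq_bigr => j _; by rewrite tensmxE.
Qed.
End Tens.

Section Comb.
Variable R : realType.
Local Notation C := (R[i]).
Variable N : nat.
Variables A S : 'M[C]_N.
Variable a : C.
Hypothesis hA2 : A *m A = A.
Hypothesis hSA : S *m A = S.
Hypothesis hAS : A *m S = S.
Hypothesis hS2 : S *m S = S + a *: (S - A).

Definition comb l m := l *: S + m *: A.

Lemma combD l m l' m' : comb l m + comb l' m' = comb (l + l') (m + m').
Proof. by rewrite /comb !scalerDl addrACA. Qed.
Lemma combZ k l m : k *: comb l m = comb (k * l) (k * m).
Proof. by rewrite /comb scalerDr !scalerA. Qed.
Lemma combS k : k *: S = comb k 0. Proof. by rewrite /comb scale0r addr0. Qed.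
Lemma combA k : k *: A = comb 0 k. Proof. by rewrite /comb scale0r add0r. Qed.
Lemma combSS : S *m S = comb (1 + a) (- a).
Proof. by rewrite hS2 /comb scalerBr scalerDl scale1r addrA scaleNr. Qed.

Lemma combM l1 m1 l2 m2 :
  comb l1 m1 *m comb l2 m2 = comb (l1 * l2 * (1 + a) + l1 * m2 + m1 * l2) (m1 * m2 - l1 * l2 * a).
Proof.
rewrite /comb mulmxDl !mulmxDr -!scalemxAl -!scalemxAr !scalerA.
rewrite -/(comb _ _) hSA hAS hA2 combSS combZ !combS !combA !combD.
by congr (comb _ _); ring.
Qed.

Lemma trcomb l m : \tr (comb l m) = l * \tr S + m * \tr A.
Proof. by rewrite /comb mxtraceD !mxtraceZ. Qed.
End Comb.

Theorem lemma6 (R : realType) (n : nat) (Q : R) (P : 'M[R[i]]_(n * n)) (r : nat) :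
  (2 <= n)%N -> 0 < Q ->
  adjmx P = P -> P *m P = P ->
  (Q ^+ 2)%:C *: (P1 P *m P2 P *m P1 P - P2 P *m P1 P *m P2 P) = P1 P - P2 P ->
  \rank P = r ->
  let k : R := (\rank (P1 P - P2 P))%:R / 2 in
  (r * n)%:R - k + Q^-1 * k <= (r ^ 2)%:R.
Proof.
move=> n2 Qpos hH hI hrel hr /=.
set k := (\rank _)%:R / 2.
have hkey := @key R n P hH hI.
have P1x := @P1x R n P hI.
set A := P1 P in hrel k hkey *.
set B := P2 P in hrel k hkey *.
have hA2 : A *m A = A by rewrite /A /P1 tensmx_mul hI mulmx1.
have hB2 : B *m B = B by rewrite /B /P2 castmx_mulmx tensmx_mul hI mulmx1.
have hAh : adjmx A = A by rewrite /A /P1 adjmx_tens hH adjmx1.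
have hBh : adjmx B = B by rewrite /B /P2 adjmx_cast adjmx_tens hH adjmx1.
have trP : \tr P = r%:R by rewrite tr_idem // hr.
have trA : \tr A = (r * n)%:R by rewrite /A /P1 tr_tens trP mxtrace1 natrM.
have trB : \tr B = (r * n)%:R by rewrite /B /P2 tr_cast tr_tens trP mxtrace1 natrM mulrC.
set Qc : R[i] := Q%:C.
have Qc0 : Qc != 0 by rewrite /Qc fmorph_eq0 gt_eqF.
have Qc1 : Qc + 1 != 0.
  by rewrite /Qc -(rmorph1 (real_complex R)) -rmorphD fmorph_eq0 gt_eqF // ltr_wpDr.
set a : R[i] := (Qc ^+ 2)^-1.
have h1 : A *m B *m A - B *m A *m B = a *: (A - B).
  rewrite -hrel scalerA /a rmorphXn -/Qc mulVf ?scale1r // expf_neq0 //.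
set S := A *m B *m A.
have hcA : a%:M *m A = A *m a%:M by rewrite scalar_mxC.
have hS2 : S *m S = S + a *: (S - A).
  have := @SS_id _ A B hA2 (a%:M) hcA.
  rewrite -!mulmxE h1 mul_scalar_mx => /(_ erefl).
  by rewrite mul_scalar_mx.
have hSA : S *m A = S by rewrite /S -mulmxA hA2.
have hAS : A *m S = S by rewrite /S !mulmxA hA2.
set D := A - B.
have hD2 : D *m D = A + B - A *m B - B *m A by exact: (@sq_id _ A B hA2 hB2).
have hD3 : D *m D *m D = D - a *: D.
  by have := @cube_id _ A B hA2 hB2; rewrite -!mulmxE h1 -/D.
have hDh : adjmx D = D by rewrite /D adjmxB hAh hBh.
have hT : \tr (D *m D) = (1 - a) * (\rank D)%:R.
  case: (eqVneq a 1) => ha1.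
    have D30 : D *m D *m D = 0 by rewrite hD3 ha1 scale1r subrr.
    have hD2h : adjmx (D *m D) = D *m D by rewrite adjmxM hDh.
    have D20 : D *m D = 0.
      by apply: (@herm_sq0 R _ _ hD2h); rewrite mulmxA D30 mul0mx.
    have D0 : D = 0 := @herm_sq0 R _ _ hDh D20.
    by rewrite D20 D0 mxrank0 mxtrace0 ha1 subrr mul0r.
  have c0 : 1 - a != 0 by rewrite subr_eq0 eq_sym.
  set c := (1 - a)^-1.
  have eD3 : D *m D *m D = (1 - a) *: D by rewrite hD3 scalerBl scale1r.
  set E := c *: (D *m D).
  have hE : E *m E = E.
    rewrite /E -scalemxAl -scalemxAr scalerA.
    have -> : D *m D *m (D *m D) = (1 - a) *: (D *m D).
      by rewrite mulmxA eD3 -scalemxAl.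
    by rewrite scalerA -mulrA mulVf // mulr1.
  have eD : (D *m D) *m (c *: D) = D.
    by rewrite -scalemxAr eD3 scalerA mulVf // scale1r.
  have rE : \rank E = \rank D.
    have cn0 : c != 0 by rewrite invr_eq0.
    rewrite /E (eqmx_scale _ cn0).
    apply/eqP; rewrite eqn_leq mxrankM_maxl /=.
    by apply: leq_trans (mxrankM_maxl (D *m D) (c *: D)); rewrite eD.
  have := @tr_idem _ _ _ hE; rewrite rE /E mxtraceZ => <-.
  by rewrite mulrA mulfV // mul1r.
set rn : R[i] := (r * n)%:R.
set kc : R[i] := (\rank D)%:R / 2.
have tAB : \tr (A *m B) = rn - (1 - a) * kc.
  have trD2 : \tr (D *m D) = rn *+ 2 - 2 * \tr (A *m B).
    rewrite hD2 !raddfB raddfD /= trA trB [\tr (B *m A)]mxtrace_mulC -/rn.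
    by rewrite mulr2n; ring.
  by rewrite /kc mulrA -hT trD2; field.
have trS : \tr S = \tr (A *m B).
  by rewrite /S mxtrace_mulC mulmxA hA2.
have hQc : Num.conj Qc = Qc by exact: conjc_real.
set al : R[i] := - Qc ^+ 2 / (Qc + 1).
set be : R[i] := (Qc ^+ 2 + Qc + 1) / (Qc + 1).
have rQ : Qc \is Num.real by rewrite /Qc complex_real.
have hal : Num.conj al = al.
  by apply: conj_Creal; rewrite /al rpredM ?rpredN ?rpredV ?rpredD ?rpred1 ?rpredX.
have hbe : Num.conj be = be.
  by apply: conj_Creal; rewrite /be rpredM ?rpredN ?rpredV ?rpredD ?rpred1 ?rpredX.
have cM := @combM R _ A S a hA2 hSA hAS hS2.
set F := comb R _ A S al be.
have hSh : adjmx S = S by rewrite /S !adjmxM hAh hBh mulmxA.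
have hFh : adjmx F = F by rewrite /F /comb adjmxD !adjmxZ hal hbe hSh hAh.
set W := B *m A *m F.
have WW : adjmx W *m W = A.
  rewrite /W !adjmxM hFh hAh hBh.
  have -> : F *m (A *m B) *m (B *m A *m F) = F *m S *m F.
    by rewrite /S !mulmxA -(mulmxA (F *m A) B B) hB2.
  have -> : S = comb R _ A S 1 0 by rewrite /comb scale1r scale0r addr0.
  rewrite /F !cM.
  transitivity (comb R _ A S 0 1); last by rewrite /comb scale1r scale0r add0r.
  congr (comb _ _ _ _ _ _); by rewrite /al /be /a; field; apply/andP; split; first [exact: Qc0 | exact: Qc1].
have hk := hkey W WW.
set X := (r * n)%:R - k + Q^-1 * k.
have eT : \tr (W *m (A *m B)) = X%:C.
  rewrite /W mxtrace_mulC.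
  have -> : A *m B *m (B *m A *m F) = comb R _ A S 1 0 *m F.
    by rewrite /comb scale1r scale0r addr0 /S !mulmxA -(mulmxA A B B) hB2.
  have ek : k%:C = kc by rewrite /k /kc fmorph_div !rmorph_nat.
  have eX : X%:C = rn - kc + kc / Qc.
    rewrite /X !rmorphD rmorphN; congr (_ - _ + _).
    - exact: rmorph_nat.
    - exact: ek.
    rewrite rmorphM fmorphV mulrC; congr (_ * _); exact: ek.
  rewrite eX /F cM trcomb trS tAB trA -/rn /kc /a /al /be.
  by field; apply/andP; split; first [exact: Qc0 | exact: Qc1].
rewrite eT trP in hk.
have hc : Num.conj (X%:C) = X%:C by apply: conj_Creal; rewrite complex_real.
rewrite hc in hk.
have : 0 <= ((r ^ 2)%:R *+ 2 - X - X : R)%:C.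
  by rewrite !rmorphB rmorphMn rmorph_nat natrX.
rewrite ler0c; lra.
Qed.
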